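(* Let $n\ge2$, $m\ge2$ be integers, let $\mathcal{V}=\mathcal{V}_1\otimes\dots\otimes\mathcal{V}_m$ be a tensor product of vector spaces over a field $\mathbb{F}$, and let $\{x_a : a\in[n]\}$ be a multiset of product tensors with $x_a=x_{a,1}\otimes\dots\otimes x_{a,m}$. For $S\subseteq[n]$ and $j\in[m]$ let $d_j^S=\dim\operatorname{span}\{x_{a,j}:a\in S\}$. Let $r\in \{0,1,\dots,n\}$ be an integer. Suppose that for every subset $S \subseteq [n]$ with $2\leq |S| \leq n$ it holds that $|S|+\min\{|S|,r\} \leq\sum_{j=1}^m (d_j^S-1)+1$. Then any non-zero linear combination of more than $r$ elements of $\{x_a : a \in [n]\}$ has tensor rank greater than $r$, and every tensor $v \in \operatorname{span}\{x_a : a \in [n]\}$ of tensor rank at most $r$ has a unique tensor rank decomposition into a linear combination of elements of $\{x_a : a \in [n]\}$.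
   Context: $[n]=\{1,\dots,n\}$. A product tensor is a non-zero tensor $z_1\otimes\dots\otimes z_m$, $z_j\in\mathcal{V}_j$. The tensor rank of $v$ is the minimum number of product tensors summing to $v$; a tensor rank decomposition is such a minimal sum. A decomposition $v=\sum_{a\in[n]}z_a$ into product tensors constitutes a unique tensor rank decomposition if for every $r'\le n$ and every multiset of product tensors $\{y_a:a\in[r']\}$ with $v=\sum_{a\in[r']}y_a$, it holds that $r'=n$ and $\{z_a\}=\{y_a\}$ as multisets. A ''linear combination of $k$ elements'' means a combination of $k$ of the $x_a$ with non-zero coefficients. *)

(* Defs.v *)
(* Finite-dimensional model: V_j = F^(dims j) (row vectors),
   V_1 (x) ... (x) V_m = functions on multi-indices (i_1,...,i_m). *)
From HB Require Import structures.
From mathcomp Require Import all_boot all_order all_algebra.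
Set Implicit Arguments. Unset Strict Implicit. Unset Printing Implicit Defensive.
Import Order.TTheory GRing.Theory Num.Theory.
Local Open Scope ring_scope.

Definition mindex (m : nat) (dims : 'I_m -> nat) :=
  {dffun forall j : 'I_m, 'I_(dims j)}.

Notation tensor F dims := {ffun mindex dims -> F^o}.

Definition tprod (F : fieldType) (m : nat) (dims : 'I_m -> nat)
  (z : forall j : 'I_m, 'rV[F]_(dims j)) : tensor F dims :=
  [ffun i : mindex dims => \prod_(j < m) z j 0 (i j)].

Definition is_product_tensor (F : fieldType) (m : nat) (dims : 'I_m -> nat)
  (t : tensor F dims) : Prop :=
  t != 0 /\ exists z : forall j : 'I_m, 'rV[F]_(dims j), t = tprod z.

Definition is_decomp (F : fieldType) (m : nat) (dims : 'I_m -> nat)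
  (v : tensor F dims) (s : seq (tensor F dims)) : Prop :=
  (forall t, t \in s -> is_product_tensor t) /\ v = \sum_(t <- s) t.

Definition trank_le (F : fieldType) (m : nat) (dims : 'I_m -> nat)
  (v : tensor F dims) (r : nat) : Prop :=
  exists s, (size s <= r)%N /\ is_decomp v s.

Definition unique_trd (F : fieldType) (m : nat) (dims : 'I_m -> nat)
  (v : tensor F dims) (s : seq (tensor F dims)) : Prop :=
  is_decomp v s /\
  forall s', (size s' <= size s)%N -> is_decomp v s' -> perm_eq s s'.

Definition dspan (F : fieldType) (m n : nat) (dims : 'I_m -> nat)
  (x : 'I_n -> forall j : 'I_m, 'rV[F]_(dims j)) (S : {set 'I_n}) (j : 'I_m)
  : nat := \rank (\sum_(a in S) <<x a j>>)%MS.

(* Main.v *)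
Require Import Defs.
From HB Require Import structures.
From mathcomp Require Import all_boot all_order all_algebra.
From mathcomp Require Import zify.
Set Implicit Arguments. Unset Strict Implicit. Unset Printing Implicit Defensive.
Import Order.TTheory GRing.Theory Num.Theory.
Local Open Scope ring_scope.

Section Spans.
Variables (F : fieldType) (I : finType) (N : nat).
Implicit Types (v : I -> 'rV[F]_N) (S A B : {set I}).

Definition span v S := (\sum_(a in S) <<v a>>)%MS.
Definition rk v S := \rank (span v S).

Lemma span0 v : span v set0 = 0.
Proof. by rewrite /span big_set0. Qed.

Lemma rk0 v : rk v set0 = 0%N.
Proof. by rewrite /rk span0 mxrank0. Qed.

Lemma span_sup v S a : a \in S -> (v a <= span v S)%MS.
Proof. by move=> aS; apply: (sumsmx_sup a) => //; rewrite genmxE. Qed.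

Lemma span_subP v S k (M : 'M_(k, N)) : (forall a, a \in S -> (v a <= M)%MS) -> (span v S <= M)%MS.
Proof. by move=> H; apply/sumsmx_subP => a aS; rewrite genmxE H. Qed.

Lemma spanS v A B : A \subset B -> (span v A <= span v B)%MS.
Proof. by move=> /subsetP AB; apply: span_subP => a aA; apply: span_sup; apply: AB. Qed.

Lemma rkS v A B : A \subset B -> (rk v A <= rk v B)%N.
Proof. by move=> AB; apply: mxrankS; apply: spanS. Qed.

Lemma spanU v A B : (span v (A :|: B) :=: span v A + span v B)%MS.
Proof.
apply/eqmxP/andP; split.
  apply: span_subP => a; rewrite inE => /orP[aA|aB].
    by apply: submx_trans (addsmxSl _ _); apply: span_sup.
  by apply: submx_trans (addsmxSr _ _); apply: span_sup.
by rewrite addsmx_sub !spanS // ?subsetUl ?subsetUr.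
Qed.

Lemma rkU v A B : (rk v (A :|: B) <= rk v A + rk v B)%N.
Proof. by rewrite /rk spanU mxrank_adds_leqif. Qed.

Lemma rk_card v S : (rk v S <= #|S|)%N.
Proof.
rewrite /rk /span -sum1_card.
apply: (big_ind2 (fun (M : 'M_N) (k : nat) => \rank M <= k)%N).
- by rewrite mxrank0.
- move=> M1 k1 M2 k2 h1 h2; apply: leq_trans (mxrank_adds_leqif _ _) _.
  exact: leq_add.
- by move=> a _; rewrite genmxE rank_leq_row.
Qed.

Lemma spanP v S (t : 'rV_N) :
  reflect (exists c : I -> F, t = \sum_(a in S) c a *: v a) (t <= span v S)%MS.
Proof.
apply: (iffP idP) => [/sub_sums_genmxP[u ->]|[c ->]].
  exists (fun a => u a 0 0); apply: eq_bigr => a _.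
  by rewrite {1}[u a]mx11_scalar mul_scalar_mx.
apply: summx_sub => a aS; apply: scalemx_sub; exact: span_sup.
Qed.

Lemma span_setD1 v S e : e \in S -> (v e <= span v (S :\ e))%MS ->
  (span v S :=: span v (S :\ e))%MS.
Proof.
move=> eS ve; apply/eqmxP/andP; split; last by apply: spanS; apply: subD1set.
apply: span_subP => a aS; have [->|nae] := eqVneq a e; first by [].
by apply: span_sup; rewrite !inE nae.
Qed.

End Spans.
Lemma ms_ineq (F : fieldType) p q (A B : 'M[F]_(p, q)) :
  (\rank A + \rank B <= \rank (A + B)%R + \rank (A :&: B)%MS + \rank (A^T :&: B^T)%MS)%N.
Proof.
set K := kermx (A + B)%R.
have rK : \rank K = (p - \rank (A + B)%R)%N by rewrite mxrank_ker.
have hK := mxrank_mul_ker K A.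
have KA : (K *m A <= A :&: B)%MS.
  rewrite sub_capmx submxMl /=.
  have e : K *m A = - (K *m B).
    by apply/eqP; rewrite -subr_eq0 opprK -mulmxDr mulmx_ker.
  by rewrite e -mulNmx submxMl.
have KB : ((K :&: kermx A) <= kermx (row_mx A B))%MS.
  apply/sub_kermxP; rewrite mul_mx_row.
  have h1 : (K :&: kermx A)%MS *m A = 0 by apply/sub_kermxP; exact: capmxSr.
  have h2 : (K :&: kermx A)%MS *m (A + B)%R = 0 by apply/sub_kermxP; exact: capmxSl.
  have h3 : (K :&: kermx A)%MS *m B = 0.
    by move: h2; rewrite mulmxDr h1 add0r.
  by rewrite h1 h3 row_mx0.
have rKB := mxrankS KB; rewrite mxrank_ker in rKB.
have rr : \rank (row_mx A B) = (\rank A + \rank B - \rank (A^T :&: B^T)%MS)%N.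
  rewrite -mxrank_tr tr_row_mx -addsmxE.
  have := mxrank_sum_cap A^T B^T; rewrite !mxrank_tr; lia.
have rrp : (\rank (row_mx A B) <= p)%N by apply: rank_leq_row.
have rKA := mxrankS KA.
have rap : (\rank (A + B)%R <= p)%N by apply: rank_leq_row.
have c1 : (\rank (A^T :&: B^T)%MS <= \rank A^T)%N by apply: mxrankS; apply: capmxSl.
rewrite mxrank_tr in c1.
lia.
Qed.


Lemma ms_ineq' (F : fieldType) p q (A B M : 'M[F]_(p, q)) cW cU :
  M = (A + B)%R ->
  (\rank (A :&: B)%MS <= cW)%N -> (\rank (A^T :&: B^T)%MS <= cU)%N ->
  (\rank A + \rank B <= \rank M + cW + cU)%N.
Proof. by move=> -> h1 h2; have := ms_ineq A B; lia. Qed.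

Definition connb (F : fieldType) (I : finType) N (v : I -> 'rV[F]_N) (S : {set I}) :=
  (S != set0) && [forall A : {set I}, ((A \subset S) && (A != set0) && (A != S)) ==>
     (rk v S < rk v A + rk v (S :\: A))%N].

Lemma nz_entry (F : fieldType) k (a : 'rV[F]_k) : a != 0 -> exists i, a 0 i != 0.
Proof.
move=> a0; apply/existsP; apply: contraR a0 => /existsPn H.
by apply/eqP/rowP => i; rewrite mxE; apply/eqP; move: (H i); rewrite negbK.
Qed.

Lemma outer_row (F : fieldType) p q (a : 'rV[F]_p) (b : 'rV[F]_q) i :
  row i (a^T *m b) = a 0 i *: b.
Proof. by apply/rowP => j; rewrite !mxE big_ord1 !mxE. Qed.

Lemma outer_sub (F : fieldType) p q k (a : 'rV[F]_p) (b : 'rV[F]_q) (C : 'M[F]_(k, q)) :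
  a != 0 -> (a^T *m b <= C)%MS -> (b <= C)%MS.
Proof.
move=> /nz_entry[i ai] H.
have : (row i (a^T *m b) <= C)%MS by apply: submx_trans H; apply: row_sub.
rewrite outer_row => /(scalemx_sub (a 0 i)^-1); by rewrite scalerA mulVf // scale1r.
Qed.

Lemma outer_neq0 (F : fieldType) p q (a : 'rV[F]_p) (b : 'rV[F]_q) :
  a != 0 -> b != 0 -> a^T *m b != 0.
Proof.
move=> a0 b0; have [i ai] := nz_entry a0.
apply/eqP => H; move: (outer_row a b i); rewrite H.
have -> : row i (0 : 'M[F]_(p, q)) = 0 by apply/rowP => j; rewrite !mxE.
by move/esym/eqP; rewrite scaler_eq0 (negPf ai) (negPf b0).
Qed.

Lemma rank_outer (F : fieldType) p q (a : 'rV[F]_p) (b : 'rV[F]_q) :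
  a != 0 -> b != 0 -> \rank (a^T *m b) = 1%N.
Proof.
move=> a0 b0; apply/eqP; rewrite eqn_leq; apply/andP; split.
  by apply: leq_trans (mxrankM_maxr _ _) _; rewrite rank_rV b0.
by rewrite lt0n mxrank_eq0 outer_neq0.
Qed.

Section T2.
Variables (F : fieldType) (I : finType) (p q : nat) (u : I -> 'rV[F]_p) (w : I -> 'rV[F]_q).
Hypotheses (hu : forall a, u a != 0) (hw : forall a, w a != 0).
Definition yy a := mxvec ((u a)^T *m w a).

Lemma yspan_coef (R : {set I}) (M : 'M_(p, q)) : (mxvec M <= span yy R)%MS ->
  exists c : I -> F, M = \sum_(a in R) c a *: ((u a)^T *m w a).
Proof.
move=> /spanP[c e]; exists c; rewrite -[M]mxvecK e linear_sum.
by apply: eq_bigr => a _; rewrite linearZ /= mxvecK.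
Qed.

Lemma yspan_row (R : {set I}) (M : 'M_(p, q)) : (mxvec M <= span yy R)%MS -> (M <= span w R)%MS.
Proof.
move=> /yspan_coef[c ->]; apply: summx_sub => a aR; apply: scalemx_sub.
by apply: submx_trans (submxMl _ _) _; apply: span_sup.
Qed.

Lemma yspan_col (R : {set I}) (M : 'M_(p, q)) : (mxvec M <= span yy R)%MS -> (M^T <= span u R)%MS.
Proof.
move=> /yspan_coef[c ->]; rewrite linear_sum; apply: summx_sub => a aR.
rewrite linearZ /=; apply: scalemx_sub; rewrite trmx_mul trmxK.
by apply: submx_trans (submxMl _ _) _; apply: span_sup.
Qed.

Lemma yy_neq0 a : yy a != 0.
Proof. by rewrite /yy mxvec_eq0 outer_neq0. Qed.

Definition Kcond (R : {set I}) (t : 'rV_(p * q)) := forall C : {set I}, C \subset R -> C != set0 ->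
  (rk yy C + rk yy (R :\: C) <= rk yy R)%N -> ~~ (t <= span yy (R :\: C))%MS.

Definition Kprop (R : {set I}) := forall M : 'M_(p, q), (mxvec M <= span yy R)%MS ->
  Kcond R (mxvec M) -> (rk u R + rk w R <= rk yy R + \rank M)%N.

Lemma span1 N (v : I -> 'rV[F]_N) e : (span v [set e] :=: v e)%MS.
Proof. by rewrite /span big_set1; apply: genmxE. Qed.

Lemma rk_setD1 N (v : I -> 'rV[F]_N) (S : {set I}) e : e \in S -> (v e <= span v (S :\ e))%MS ->
  rk v S = rk v (S :\ e).
Proof. by move=> eS H; rewrite /rk (span_setD1 eS H). Qed.

Lemma T2step (S : {set I}) e : e \in S -> connb yy S -> Kprop (S :\ e) ->
  (rk u S + rk w S <= rk yy S + 1)%N.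
Proof.
move=> eS /andP[S0 /forallP cS] KP.
have [R0|R0] := eqVneq (S :\ e) set0.
  have HS : S = [set e] by rewrite -(setD1K eS) R0 setU0.
  by rewrite HS /rk !span1 !rank_rV hu hw yy_neq0.
have e1S : [set e] != S by apply: contra_neq R0 => <-; rewrite setDv.
have e10 : [set e] != set0 by apply/set0Pn; exists e; rewrite inE.
have ye : (yy e <= span yy (S :\ e))%MS.
  have := cS [set e]; rewrite sub1set eS e10 e1S /= => hlt.
  have hS : (span yy S :=: yy e + span yy (S :\ e))%MS.
    rewrite -{1}(setD1K eS); apply: eqmx_trans (spanU _ _ _) _.
    exact: adds_eqmx (span1 _ _) (eqmx_refl _).
  move: hlt; rewrite {1}/rk hS /rk span1.
  have := mxrank_sum_cap (yy e) (span yy (S :\ e)).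
  have := mxrank_leqif_sup (capmxSl (yy e) (span yy (S :\ e))).
  move=> [le1 eq1] hsc hlt.
  have : (\rank (yy e) == \rank (yy e :&: span yy (S :\ e))%MS).
    rewrite eqn_leq le1 andbT; move: hlt hsc; rewrite !rank_rV yy_neq0 /=; lia.
  rewrite eq_sym eq1 => H; apply: submx_trans H _; exact: capmxSr.
have KC : Kcond (S :\ e) (yy e).
  move=> C CR C0 hC; apply/negP => hy.
  have CS : C \subset S by apply: subset_trans CR (subsetDl _ _).
  have eC : e \notin C by apply/negP => /(subsetP CR); rewrite !inE eqxx.
  have CnS : C != S by apply: contraNneq eC => ->.
  have := cS C; rewrite CS C0 CnS /= => hlt.
  have eSC : e \in S :\: C by rewrite inE eC eS.
  have hset : (S :\: C) :\ e = (S :\ e) :\: C.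
    by apply/setP => i; rewrite !inE; case: (i == e); case: (i \in C).
  have r1 : rk yy (S :\: C) = rk yy ((S :\ e) :\: C).
    by rewrite (rk_setD1 eSC) ?hset.
  have r2 : (rk yy (S :\ e) <= rk yy S)%N by apply: rkS; apply: subsetDl.
  rewrite r1 in hlt; have := leq_trans hlt (leq_trans hC r2); by rewrite ltnn.
have := KP ((u e)^T *m w e) ye KC; rewrite rank_outer //.
have ue : (u e <= span u (S :\ e))%MS.
  by apply: (outer_sub (hw e)); move: (yspan_col ye); rewrite trmx_mul trmxK.
have we : (w e <= span w (S :\ e))%MS by apply: (outer_sub (hu e)); exact: yspan_row ye.
by rewrite (rk_setD1 eS ue) (rk_setD1 eS we) (rk_setD1 eS ye).
Qed.

Lemma Kcond_split (R A : {set I}) (t1 t2 : 'rV_(p * q)) :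
  A \subset R -> (rk yy A + rk yy (R :\: A) <= rk yy R)%N ->
  (t2 <= span yy (R :\: A))%MS -> Kcond R (t1 + t2) -> Kcond A t1.
Proof.
move=> AR hA ht2 KR C CA C0 hC; apply/negP => ht1.
have CR : C \subset R by apply: subset_trans CA AR.
have hset : R :\: C = (A :\: C) :|: (R :\: A).
  apply/setP => i; rewrite !inE.
  have h1 : (i \in C) ==> (i \in A) by apply/implyP/(subsetP CA).
  have h2 : (i \in A) ==> (i \in R) by apply/implyP/(subsetP AR).
  by move: h1 h2; case: (i \in C); case: (i \in A); case: (i \in R).
have hr : (rk yy C + rk yy (R :\: C) <= rk yy R)%N.
  rewrite hset; have := rkU yy (A :\: C) (R :\: A); lia.
move: (KR C CR C0 hr); rewrite hset /span; apply/negP/negPn.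
rewrite -/(span yy ((A :\: C) :|: (R :\: A))) spanU; exact: addmx_sub_adds ht1 ht2.
Qed.

Lemma Kall n (R : {set I}) : (#|R| <= n)%N -> Kprop R.
Proof.
elim: n R => [|n IH] R hR M hM KM.
  move: hR; rewrite leqn0 => /eqP/cards0_eq ->; by rewrite /rk !span0 !mxrank0.
have [->|R0] := eqVneq R set0; first by rewrite /rk !span0 !mxrank0.
case cR: (connb yy R).
  have [e eR] := set0Pn _ R0.
  have M0 : M != 0.
    have := KM R (subxx _) R0; rewrite setDv rk0 addn0 leqnn span0 submx0 mxvec_eq0.
    by apply.
  have := T2step eR cR (IH _ _); rewrite (cardsD1 e R) eR in hR.
  move=> /(_ hR) H; apply: leq_trans H _; rewrite leq_add2l lt0n mxrank_eq0 M0.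
  done.
move: cR; rewrite /connb R0 /= => /forallPn[A]; rewrite negb_imply => /andP[/andP[/andP[AR A0] AnR]].
rewrite -leqNgt => hA.
set A' := R :\: A.
have A'R : A' \subset R by apply: subsetDl.
have A'0 : A' != set0.
  apply: contra_neq AnR => H; apply/eqP; rewrite eqEsubset AR /=.
  apply/subsetP => i iR; apply/negPn/negP => iA.
  by move: (in_set0 i); rewrite -H !inE iR iA.
have hRA : R :\: A' = A.
  apply/setP => i; rewrite !inE.
  have h2 : (i \in A) ==> (i \in R) by apply/implyP/(subsetP AR).
  by move: h2; case: (i \in A); case: (i \in R).
have hRU : R = A :|: A'.
  apply/setP => i; rewrite !inE.
  have h2 : (i \in A) ==> (i \in R) by apply/implyP/(subsetP AR).
  by move: h2; case: (i \in A); case: (i \in R).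
have hsp : forall N (v : I -> 'rV[F]_N), (span v R :=: span v A + span v A')%MS.
  by move=> N v; rewrite {1}hRU; exact: spanU.
move: (hM); rewrite hsp => /sub_addsmxP[[c1 c2] /= e12].
set v1 := c1 *m span yy A; set v2 := c2 *m span yy A'.
have s1 : (v1 <= span yy A)%MS by apply: submxMl.
have s2 : (v2 <= span yy A')%MS by apply: submxMl.
have hA' : (rk yy A' + rk yy (R :\: A') <= rk yy R)%N by rewrite hRA addnC.
have K1 : Kcond A v1.
  by apply: (Kcond_split AR hA s2); rewrite -e12.
have K2 : Kcond A' v2.
  have s1' : (v1 <= span yy (R :\: A'))%MS by rewrite hRA.
  apply: (Kcond_split A'R hA' s1').
  by rewrite addrC -e12.
have cA : (#|A| < #|R|)%N by apply: proper_card; rewrite properEneq AnR AR.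
have cA' : (#|A'| < #|R|)%N by apply: proper_card; rewrite properEneq A'R andbT; apply: contra_neq A0 => H; rewrite -hRA H setDv.
have IH1 := IH A (leq_trans (leq_trans cA hR) (leqnn _)) (vec_mx v1).
rewrite vec_mxK in IH1; have {IH1} IH1 := IH1 s1 K1.
have IH2 := IH A' (leq_trans cA' hR) (vec_mx v2).
rewrite vec_mxK in IH2; have {IH2} IH2 := IH2 s2 K2.
have eM : M = vec_mx v1 + vec_mx v2 by rewrite -linearD /= -e12 mxvecK.
have r1 : (vec_mx v1 <= span w A)%MS by apply: yspan_row; rewrite vec_mxK.
have r2 : (vec_mx v2 <= span w A')%MS by apply: yspan_row; rewrite vec_mxK.
have t1 : ((vec_mx v1)^T <= span u A)%MS by apply: yspan_col; rewrite vec_mxK.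
have t2 : ((vec_mx v2)^T <= span u A')%MS by apply: yspan_col; rewrite vec_mxK.
have capW := mxrankS (capmxS r1 r2).
have capU := mxrankS (capmxS t1 t2).
have hu' := mxrank_sum_cap (span u A) (span u A').
have hw' := mxrank_sum_cap (span w A) (span w A').
have ru : rk u R = \rank (span u A + span u A')%MS by rewrite /rk hsp.
have rw : rk w R = \rank (span w A + span w A')%MS by rewrite /rk hsp.
have ry : (rk yy R <= rk yy A + rk yy A')%N by rewrite {1}hRU; apply: rkU.
rewrite ru rw; move: IH1 IH2 capW capU hu' hw' ry hA.
rewrite /rk -/A' => h1 h2 h4 h5 h6 h7 h8 h9.
have h10 := ms_ineq' eM h4 h5.
clear -h1 h2 h6 h7 h8 h9 h10. lia.
Qed.

Theorem T2 (S : {set I}) : connb yy S -> (rk u S + rk w S <= rk yy S + 1)%N.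
Proof.
move=> cS; have [e eS] := set0Pn _ (proj1 (andP cS)).
exact: (T2step eS cS (Kall (leqnn _))).
Qed.

Lemma split_transfer (A B : {set I}) :
  (rk w A + rk w B <= rk w (A :|: B))%N -> (rk yy A + rk yy B <= rk yy (A :|: B))%N.
Proof.
move=> h.
have cw : (span w A :&: span w B <= (0 : 'M_q))%MS.
  rewrite -mxrank_adds_leqif; move: h; rewrite /rk spanU.
  by have := mxrank_adds_leqif (span w A) (span w B) => [[]] h1 _ h2; rewrite eqn_leq h1 h2.
have cy : (span yy A :&: span yy B <= (0 : 'M_(p * q)))%MS.
  apply/row_subP => i; set r := row i _.
  have rA : (r <= span yy A)%MS by apply: submx_trans (row_sub _ _) (capmxSl _ _).
  have rB : (r <= span yy B)%MS by apply: submx_trans (row_sub _ _) (capmxSr _ _).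
  rewrite -(vec_mxK r) in rA rB.
  have h0 : (vec_mx r <= span w A :&: span w B)%MS.
    by rewrite sub_capmx (yspan_row rA) (yspan_row rB).
  have := submx_trans h0 cw; by rewrite !submx0 vec_mx_eq0.
rewrite /rk spanU; have := mxrank_sum_cap (span yy A) (span yy B).
move: cy; rewrite submx0 -mxrank_eq0 => /eqP ->; lia.
Qed.

End T2.

Section Tens.
Variables (F : fieldType) (m : nat) (dims : 'I_m -> nat).
Local Notation MI := (mindex dims).
Local Notation NN := #|{: mindex dims}|.
Variables (j0 : 'I_m).
Definition upd (ii : MI) (k : 'I_(dims j0)) : MI := finfun (dfwith (fun j => ii j) k).
Lemma upd_in ii k : upd ii k j0 = k.
Proof. by rewrite ffunE dfwith_in. Qed.
Lemma upd_out ii k j : j0 != j -> upd ii k j = ii j.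
Proof. by move=> h; rewrite ffunE dfwith_out. Qed.
Lemma upd_upd ii k k' : upd (upd ii k) k' = upd ii k'.
Proof.
apply/ffunP => j; rewrite !ffunE; case: (dfwithP (fun j1 => upd ii k j1) k' j) => [|j1 h].
  by rewrite dfwith_in.
by rewrite dfwith_out // upd_out.
Qed.
Lemma upd_id ii : upd ii (ii j0) = ii.
Proof.
apply/ffunP => j; rewrite !ffunE; case: (dfwithP (fun j1 => ii j1) (ii j0) j) => //.
Qed.

Definition vec (t : tensor F dims) : 'rV[F]_NN := \row_(i < NN) t (enum_val i).

Lemma vecE t ii : vec t 0 (enum_rank ii) = t ii.
Proof. by rewrite mxE enum_rankK. Qed.

Lemma vec_inj : injective vec.
Proof. by move=> t t' e; apply/ffunP => ii; rewrite -!vecE e. Qed.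

Lemma vec_lin : linear vec.
Proof. by move=> a t t'; apply/rowP => i; rewrite !mxE !ffunE. Qed.
HB.instance Definition _ := GRing.isLinear.Build F (tensor F dims) 'rV[F]_NN *:%R vec vec_lin.

Lemma tprodE (z : forall j : 'I_m, 'rV[F]_(dims j)) (ii : MI) : tprod z ii = \prod_(j < m) z j 0 (ii j).
Proof. by rewrite ffunE. Qed.

Lemma tprod_neq0 (z : forall j : 'I_m, 'rV[F]_(dims j)) :
  (forall j, z j != 0) -> tprod z != 0.
Proof.
move=> hz.
have : forall j, exists i : 'I_(dims j), z j 0 i != 0.
  by move=> j; apply: nz_entry.
case/fin_all_exists => f hf.
apply/negP => /eqP /ffunP /(_ (finfun f)); rewrite tprodE ffunE => /eqP.
by rewrite prodf_seq_eq0 => /hasP[j _]; rewrite ffunE (negPf (hf j)).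
Qed.

Lemma tprod_factor (z : forall j : 'I_m, 'rV[F]_(dims j)) j :
  tprod z != 0 -> z j != 0.
Proof.
apply: contra_neq => zj; apply/ffunP => ii; rewrite tprodE ffunE (bigD1 j) //=.
by rewrite zj mxE mul0r.
Qed.

Variable k0 : 'I_(dims j0).

Definition flat (v : 'rV[F]_NN) : 'rV[F]_(dims j0 * NN) :=
  mxvec (\matrix_(k < dims j0, i < NN)
    (v 0 (enum_rank (upd (enum_val i) k)) * ((enum_val i j0 == k0)%:R))).

Lemma flat_lin : linear flat.
Proof.
move=> a v v'; rewrite /flat -linearP /=; congr mxvec; apply/matrixP => k i.
by rewrite !mxE mulrDl mulrA.
Qed.
HB.instance Definition _ := GRing.isLinear.Build F 'rV[F]_NN 'rV[F]_(dims j0 * NN) *:%R flat flat_lin.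

Lemma flat_inj : injective flat.
Proof.
move=> v v' e; apply/rowP => i.
pose ii := enum_val i; pose i' := enum_rank (upd ii k0).
have := congr1 (fun M => vec_mx M (ii j0) i') e; rewrite !mxvecK !mxE.
rewrite /i' enum_rankK upd_in eqxx !mulr1 upd_upd upd_id /ii enum_valK.
done.
Qed.

Definition dlt : 'rV[F]_(dims j0) := delta_mx 0 k0.

Lemma flat_tprod (z : forall j : 'I_m, 'rV[F]_(dims j)) :
  flat (vec (tprod z)) = mxvec ((z j0)^T *m vec (tprod (dfwith z dlt))).
Proof.
rewrite /flat; congr mxvec; apply/matrixP => k i.
rewrite !mxE big_ord1 !mxE enum_rankK !tprodE (bigD1 j0) //= (bigD1 j0 (P := xpredT)) //=.
rewrite dfwith_in upd_in /dlt !mxE eqxx /=.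
have -> : \prod_(j < m | j != j0) z j 0 (upd (enum_val i) k j) =
          \prod_(j < m | j != j0) dfwith z dlt j 0 (enum_val i j).
  apply: eq_bigr => j hj.
  have hj' : j0 != j by rewrite eq_sym.
  by rewrite upd_out // dfwith_out.
by rewrite -mulrA [X in _ * X]mulrC.
Qed.
End Tens.

Lemma rk_lin (F : fieldType) (I : finType) N M (f : {linear 'rV[F]_N -> 'rV[F]_M})
  (finj : injective f) (v : I -> 'rV[F]_N) (S : {set I}) :
  rk (fun a => f (v a)) S = rk v S.
Proof.
set L := lin1_mx f.
have fL : forall x, f x = x *m L by move=> x; rewrite mul_rV_lin1.
have Lfree : row_free L.
  have k0 : kermx L = 0.
    apply/row_matrixP => i; rewrite row0; apply: finj; rewrite linear0 fL.
    by rewrite -row_mul mulmx_ker row0.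
  have := mxrank_ker L; rewrite k0 mxrank0 => /esym/eqP; rewrite subn_eq0 => h.
  by rewrite /row_free eqn_leq rank_leq_row h.
have e : (span (fun a => f (v a)) S :=: span v S *m L)%MS.
  apply: eqmx_sym; apply: eqmx_trans (sumsmxMr_gen _ _ _) _.
  apply: eqmx_sums => a _; rewrite fL.
  by rewrite (eq_genmx (eqmxMr L (genmxE (v a)))); apply: eqmx_refl.
by rewrite /rk e mxrankMfree.
Qed.

Lemma rk_ext (F : fieldType) (I : finType) N (v v' : I -> 'rV[F]_N) (S : {set I}) :
  (forall a, a \in S -> v a = v' a) -> rk v S = rk v' S.
Proof. by move=> h; rewrite /rk /span; congr mxrank; apply: eq_bigr => a aS; rewrite h. Qed.

Lemma rk_const (F : fieldType) (I : finType) N (c : 'rV[F]_N) (S : {set I}) :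
  S != set0 -> rk (fun _ => c) S = (c != 0).
Proof.
case/set0Pn => e eS; rewrite -rank_rV.
have h : (span (fun _ => c) S :=: c)%MS.
  apply/eqmxP/andP; split; first by apply: span_subP => a _; exact: submx_refl.
  exact: (span_sup (fun _ => c) eS).
by rewrite /rk h.
Qed.

Lemma connb_ext (F : fieldType) (I : finType) N M (v : I -> 'rV[F]_N) (v' : I -> 'rV[F]_M)
  (S : {set I}) : (forall A, rk v A = rk v' A) -> connb v S = connb v' S.
Proof.
move=> h; rewrite /connb; congr andb; apply: eq_forallb => A; by rewrite !h.
Qed.

Section Tm.
Variables (F : fieldType) (m : nat) (dims : 'I_m -> nat) (I : finType).

Definition dsp (z : I -> forall j : 'I_m, 'rV[F]_(dims j)) S j := rk (fun a => z a j) S.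
Definition Xv (z : I -> forall j : 'I_m, 'rV[F]_(dims j)) a := vec (tprod (z a)).

Lemma vec_neq0 (t : tensor F dims) : t != 0 -> vec t != 0.
Proof. by apply: contra_neq => h; apply: vec_inj; rewrite h linear0. Qed.

Lemma Tm_gen k : forall (z : I -> forall j : 'I_m, 'rV[F]_(dims j)) (S : {set I}),
  (forall a j, z a j != 0) -> (\sum_(j < m) (dsp z S j - 1) <= k)%N ->
  connb (Xv z) S -> (\sum_(j < m) (dsp z S j - 1) + 1 <= rk (Xv z) S)%N.
Proof.
elim: k => [|k IH] z S hz hk cS.
- have [e eS] := set0Pn _ (proj1 (andP cS)).
  move: hk; rewrite leqn0 => /eqP ->; rewrite add0n.
  apply: leq_trans (rkS _ (_ : [set e] \subset S)); last by rewrite sub1set.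
  by rewrite /rk span1 rank_rV vec_neq0 // tprod_neq0.
have [s0|] := leqP (\sum_(j < m) (dsp z S j - 1)) k; first exact: IH.
move=> hsum; have {hk} hk : (\sum_(j < m) (dsp z S j - 1) = k.+1)%N by apply/eqP; rewrite eqn_leq hk hsum.
have [j0 hj0] : exists j0, (1 < dsp z S j0)%N.
  apply/existsP; apply: contraLR hsum => /existsPn H; rewrite -leqNgt.
  rewrite big1 // => j _; apply/eqP; rewrite subn_eq0; move: (H j); by rewrite -leqNgt.
have [e eS] := set0Pn _ (proj1 (andP cS)).
have [k0 _] := nz_entry (hz e j0).
pose d := @dlt F m dims j0 k0.
pose z' := fun a => dfwith (z a) d.
have d0 : d != 0.
  by apply/eqP => /rowP /(_ k0); rewrite /d /dlt !mxE !eqxx => /eqP; rewrite oner_eq0.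
have hz' : forall a j, z' a j != 0.
  move=> a j; rewrite /z'; case: (dfwithP (z a) d j) => [|j1 _] //; exact: hz.
have ds1 : forall j, j0 != j -> dsp z' S j = dsp z S j.
  by move=> j hj; apply: rk_ext => a _; rewrite /z' dfwith_out.
have ds0 : dsp z' S j0 = 1%N.
  rewrite /dsp (rk_ext (v' := fun _ => d)); first by rewrite rk_const ?d0 //; apply/set0Pn; exists e.
  by move=> a _; rewrite /z' dfwith_in.
pose u := fun a => z a j0.
pose w := fun a => vec (tprod (z' a)).
have hu : forall a, u a != 0 by move=> a; exact: hz.
have hw : forall a, w a != 0 by move=> a; rewrite vec_neq0 // tprod_neq0.
have hyX : forall A, rk (yy u w) A = rk (Xv z) A.
  move=> A; rewrite -(rk_lin (@flat_inj F m dims j0 k0) (Xv z) A); apply: rk_ext => a _.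
  by rewrite /yy /Xv; symmetry; exact: flat_tprod.
have cy : connb (yy u w) S by rewrite (connb_ext _ hyX).
have cw : connb w S.
  move: cy; rewrite /connb => /andP[-> /forallP H]; apply/forallP => A.
  apply/implyP => /andP[/andP[AS A0] AnS]; move: (H A); rewrite AS A0 AnS /= => hlt.
  rewrite ltnNge; apply/negP => hle.
  have hAU : A :|: (S :\: A) = S.
    apply/setP => i; rewrite !inE; have := subsetP AS i.
    by case: (i \in A); case: (i \in S) => // ->.
  have := @split_transfer F I _ _ u w A (S :\: A); rewrite hAU => /(_ hle).
  by rewrite leqNgt hlt.
have T := T2 hu hw cy; rewrite hyX in T.
have Tu : (dsp z S j0 + rk (Xv z') S <= rk (Xv z) S + 1)%N := T.
have e1 : (\sum_(j < m) (dsp z S j - 1) =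
   dsp z S j0 - 1 + \sum_(j < m | j != j0) (dsp z S j - 1))%N by rewrite (bigD1 j0).
have e2 : (\sum_(j < m) (dsp z' S j - 1) = \sum_(j < m | j != j0) (dsp z S j - 1))%N.
  rewrite (bigD1 j0) //= ds0 subnn add0n.
  by apply: eq_bigr => j hj; rewrite ds1 // eq_sym.
have hk' : (\sum_(j < m) (dsp z' S j - 1) <= k)%N.
  by move: hk hj0; rewrite e1 e2; lia.
have IHw := IH z' S hz' hk' cw.
move: IHw Tu hj0; rewrite e1 e2; lia.
Qed.
Lemma vec_sumZ (z : I -> forall j : 'I_m, 'rV[F]_(dims j)) (c : I -> F) (A : {set I}) :
  vec (\sum_(a in A) c a *: tprod (z a)) = \sum_(a in A) c a *: Xv z a.
Proof. by rewrite linear_sum; apply: eq_bigr => a _; rewrite linearZ. Qed.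

Lemma vec_sum_span (z : I -> forall j : 'I_m, 'rV[F]_(dims j)) (c : I -> F) (A : {set I}) :
  (vec (\sum_(a in A) c a *: tprod (z a))%R <= span (Xv z) A)%MS.
Proof. by rewrite vec_sumZ; apply/spanP; exists c. Qed.

Lemma Bm (z : I -> forall j : 'I_m, 'rV[F]_(dims j)) (c : I -> F) (X : {set I}) :
  (forall a j, z a j != 0) -> (forall a, a \in X -> c a != 0) -> X != set0 ->
  \sum_(a in X) c a *: tprod (z a) = 0 ->
  (forall Y : {set I}, Y \subset X -> Y != set0 -> Y != X ->
     \sum_(a in Y) c a *: tprod (z a) != 0) ->
  (\sum_(j < m) (dsp z X j - 1) + 2 <= #|X|)%N.
Proof.
move=> hz hc X0 hX hmin.
have cX : connb (Xv z) X.
  rewrite /connb X0 /=; apply/forallP => A; apply/implyP => /andP[/andP[AX A0] AnX].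
  rewrite ltnNge; apply/negP => hle.
  have hAU : A :|: (X :\: A) = X.
    apply/setP => i; rewrite !inE; have := subsetP AX i.
    by case: (i \in A); case: (i \in X) => // ->.
  have cap0 : (span (Xv z) A :&: span (Xv z) (X :\: A) <= (0 : 'M_(#|{: mindex dims}|)))%MS.
    have hX' : (span (Xv z) X :=: span (Xv z) A + span (Xv z) (X :\: A))%MS.
      by rewrite -{1}hAU; exact: spanU.
    rewrite -mxrank_adds_leqif; move: hle; rewrite /rk hX'.
    by have := mxrank_adds_leqif (span (Xv z) A) (span (Xv z) (X :\: A)) => [[]] h1 _ h2; rewrite eqn_leq h1 h2.
  have hs : \sum_(a in A) c a *: tprod (z a) = - \sum_(a in X :\: A) c a *: tprod (z a).
    have := hX; rewrite (big_setID A) (setIidPr AX) => h.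
    by apply/eqP; rewrite -addr_eq0 h.
  have t1 := vec_sum_span z c A.
  have t2 : (vec (\sum_(a in A) c a *: tprod (z a))%R <= span (Xv z) (X :\: A))%MS.
    by rewrite hs linearN /= eqmx_opp; exact: vec_sum_span.
  have t12 : (vec (\sum_(a in A) c a *: tprod (z a))%R <= span (Xv z) A :&: span (Xv z) (X :\: A))%MS.
    by rewrite sub_capmx t1 t2.
  have := submx_trans t12 cap0; rewrite submx0.
  by move=> /eqP hv; move: (hmin A AX A0 AnX); rewrite -(inj_eq (@vec_inj _ _ _)) hv linear0 eqxx.
have [e eX] := set0Pn _ X0.
have hrk : rk (Xv z) X = rk (Xv z) (X :\ e).
  apply: rk_setD1 => //.
  have hs : c e *: tprod (z e) = - \sum_(a in X :\ e) c a *: tprod (z a).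
    have := hX; rewrite (big_setD1 e) //= => h.
    by apply/eqP; rewrite -addr_eq0 h.
  have := vec_sum_span z c (X :\ e); rewrite -eqmx_opp -linearN /= -hs linearZ /=.
  move=> /(scalemx_sub (c e)^-1); by rewrite scalerA mulVf ?hc // scale1r.
have := @Tm_gen _ z X hz (leqnn _) cX; rewrite hrk.
have := rk_card (Xv z) (X :\ e); rewrite (cardsD1 e X) eX; lia.
Qed.

End Tm.

Lemma count_enum_card (T : finType) (U : eqType) (A : {set T}) (f : T -> U) t :
  count_mem t [seq f i | i <- enum A] = #|[set i in A | f i == t]|.
Proof.
rewrite count_map -sum1_count big_enum_cond -sum1_card.
by apply: eq_bigl => i; rewrite !inE.
Qed.

Lemma card_splitU (T : finType) (U V : {set T}) (P : pred T) :
  U :&: V = set0 -> #|[set a in U :|: V | P a]| = (#|[set a in U | P a]| + #|[set a in V | P a]|)%N.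
Proof.
move=> dUV; rewrite -cardsUI.
have -> : [set a in U | P a] :&: [set a in V | P a] = set0.
  apply/setP => a; rewrite !inE; apply/negP => /andP[/andP[aU _] /andP[aV _]].
  by move: (in_set0 a); rewrite -dUV inE aU aV.
rewrite cards0 addn0; apply: eq_card => a; rewrite !inE.
by case: (a \in U); case: (a \in V); case: (P a).
Qed.

Section Cor.
Variables (F : fieldType) (n m : nat) (dims : 'I_m -> nat).
Variables (x : 'I_n -> forall j : 'I_m, 'rV[F]_(dims j)) (r : nat).
Hypothesis hx : forall a, tprod (x a) != 0.
Hypothesis hyp : forall S : {set 'I_n}, (2 <= #|S|)%N ->
  (#|S| + minn #|S| r <= \sum_(j < m) (dspan x S j - 1) + 1)%N.
Variables (k : nat) (yz : 'I_k -> forall j : 'I_m, 'rV[F]_(dims j)) (c : 'I_n -> F).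
Variable (S : {set 'I_n}).
Hypothesis hy : forall b, tprod (yz b) != 0.
Hypothesis hc : forall a, a \in S -> c a != 0.

Local Notation II := ('I_n + 'I_k)%type.
Definition zz (i : II) := match i with inl a => x a | inr b => yz b end.
Definition cc (i : II) := match i with inl a => c a | inr _ => -1 end.
Definition X0 : {set II} := [set i | match i with inl a => a \in S | inr _ => true end].
Definition PA (X : {set II}) := [set a | inl a \in X].
Definition PB (X : {set II}) := [set b | inr b \in X].
Definition vz (X : {set II}) := \sum_(i in X) cc i *: tprod (zz i).

Lemma hzz i j : zz i j != 0.
Proof. by case: i => [a|b] /=; apply: tprod_factor. Qed.

Lemma hcc i : i \in X0 -> cc i != 0.
Proof. by case: i => [a|b]; rewrite inE /= ?oppr_eq0 ?oner_eq0 //; apply: hc. Qed.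

Lemma card_II (X : {set II}) : #|X| = (#|PA X| + #|PB X|)%N.
Proof.
rewrite -!sum1_card big_sumType /=.
by congr (_ + _)%N; apply: eq_bigl => i; rewrite inE.
Qed.

Lemma PA_U (X Y : {set II}) : PA (X :|: Y) = PA X :|: PA Y.
Proof. by apply/setP => a; rewrite !inE. Qed.
Lemma PB_U (X Y : {set II}) : PB (X :|: Y) = PB X :|: PB Y.
Proof. by apply/setP => a; rewrite !inE. Qed.
Lemma PA_disj (X Y : {set II}) : X :&: Y = set0 -> PA X :&: PA Y = set0.
Proof. by move=> H; apply/setP => a; rewrite !inE -(in_setI (inl a)) H inE. Qed.
Lemma PB_disj (X Y : {set II}) : X :&: Y = set0 -> PB X :&: PB Y = set0.
Proof. by move=> H; apply/setP => a; rewrite !inE -(in_setI (inr a)) H inE. Qed.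

Lemma dspan_le (Y : {set II}) j : (dspan x (PA Y) j <= dsp zz Y j)%N.
Proof.
apply: mxrankS; apply: span_subP => a; rewrite inE => aY.
exact: (span_sup (fun i => zz i j) aY).
Qed.

Lemma card_set1P (T : finType) (a0 : T) (P : pred T) : #|[set a in [set a0] | P a]| = P a0.
Proof.
have -> : [set a in [set a0] | P a] = if P a0 then [set a0] else set0.
  apply/setP => a; rewrite !inE; have [->|ne] := eqVneq a a0.
    by case: (P a0); rewrite ?inE ?eqxx.
  by case: (P a0); rewrite ?inE ?(negPf ne) ?andFb.
by case: (P a0); rewrite ?cards1 ?cards0.
Qed.

Lemma block (Y : {set II}) : Y \subset X0 -> Y != set0 -> vz Y = 0 ->
  (forall Z : {set II}, Z \subset Y -> Z != set0 -> Z != Y -> vz Z != 0) ->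
  (minn #|PA Y| r.+1 <= #|PB Y|)%N /\
  ((#|PA Y| <= r)%N -> (#|PA Y| <= #|PB Y|)%N /\ (#|PB Y| = #|PA Y| ->
     forall t, #|[set a in PA Y | c a *: tprod (x a) == t]| = #|[set b in PB Y | tprod (yz b) == t]|)).
Proof.
move=> YX Y0 hY hmin.
have hcY : forall i, i \in Y -> cc i != 0 by move=> i iY; apply: hcc; apply: (subsetP YX).
have B := Bm hzz hcY Y0 hY hmin.
have cY := card_II Y.
have hdsp : (\sum_(j < m) (dspan x (PA Y) j - 1) <= \sum_(j < m) (dsp zz Y j - 1))%N.
  by apply: leq_sum => j _; apply: leq_sub2r; apply: dspan_le.
case: (ltnP 1 #|PA Y|) => [a2|a1].
  have hb : (minn #|PA Y| r < #|PB Y|)%N.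
    have arith : forall a b s1 s2 M : nat, (a + minn a r <= s1 + 1 -> s1 <= s2 -> s2 + 2 <= M ->
      M = a + b -> minn a r < b)%N by clear; lia.
    exact: (arith _ _ _ _ _ (hyp a2) hdsp B cY).
  split; first by move: hb; clear; lia.
  move=> ar; split; first by move: hb ar; clear; lia.
  by move=> eab; exfalso; move: hb ar eab; clear; lia.
have b1 : (1 <= #|PB Y|)%N.
  have arith : forall a b s2 M : nat, (s2 + 2 <= M -> M = a + b -> a <= 1 -> 1 <= b)%N by clear; lia.
  exact: (arith _ _ _ _ B cY a1).
split; first by move: a1 b1; clear; lia.
move=> _; split; first by move: a1 b1; clear; lia.
move=> eab t.
have a1' : #|PA Y| = 1%N by move: eab a1 b1; clear; lia.
have b1' : #|PB Y| = 1%N by rewrite eab.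
move: a1' b1' => /eqP/cards1P[a0 ha] /eqP/cards1P[b0 hb].
have hY2 : Y = inl a0 |: [set inr b0].
  apply/setP => i; rewrite !inE; case: i => [a|b].
    have e : (a \in PA Y) = (inl a \in Y) by rewrite inE.
    by rewrite -e ha !inE /= orbF.
  have e : (b \in PB Y) = (inr b \in Y) by rewrite inE.
  by rewrite -e hb !inE /=.
have he : c a0 *: tprod (x a0) = tprod (yz b0).
  move: hY; rewrite /vz hY2 big_setU1 ?inE //= big_set1 /= scaleN1r => /eqP.
  by rewrite addr_eq0 opprK => /eqP.
by rewrite ha hb !card_set1P he.
Qed.

Lemma card_set0P (T : finType) (P : pred T) : #|[set a in (set0 : {set T}) | P a]| = 0%N.
Proof. by apply: eq_card0 => a; rewrite !inE. Qed.

Lemma invariant N (X : {set II}) : (#|X| <= N)%N -> X \subset X0 -> vz X = 0 ->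
  (minn #|PA X| r.+1 <= #|PB X|)%N /\
  ((#|PA X| <= r)%N -> (#|PA X| <= #|PB X|)%N /\ (#|PB X| = #|PA X| ->
     forall t, #|[set a in PA X | c a *: tprod (x a) == t]| = #|[set b in PB X | tprod (yz b) == t]|)).
Proof.
elim: N X => [|N IH] X hN XX0 hX.
  have -> : X = set0 by apply: cards0_eq; move: hN; rewrite leqn0 => /eqP.
  have e1 : PA set0 = set0 by apply/setP => a; rewrite !inE.
  have e2 : PB set0 = set0 by apply/setP => a; rewrite !inE.
  by rewrite e1 e2 !cards0; split => // _; split => // _ t; rewrite !card_set0P.
have [X0e|Xn0] := eqVneq X set0.
  have e1 : PA X = set0 by apply/setP => a; rewrite X0e !inE.
  have e2 : PB X = set0 by apply/setP => a; rewrite X0e !inE.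
  by rewrite e1 e2 !cards0; split => // _; split => // _ t; rewrite !card_set0P.
pose P := fun Y : {set II} => [&& Y \subset X, Y != set0 & vz Y == 0].
have PX : P X by rewrite /P subxx Xn0 hX eqxx.
case: (@arg_minnP _ X P (fun Y => #|Y|) PX) => Y /and3P[YX Y0 /eqP hY] minY.
have hmin : forall Z : {set II}, Z \subset Y -> Z != set0 -> Z != Y -> vz Z != 0.
  move=> Z ZY Z0 ZnY; apply/negP => /eqP hZ.
  have := minY Z; rewrite /P (subset_trans ZY YX) Z0 hZ eqxx => /(_ isT).
  by rewrite leqNgt proper_card // properEneq ZnY ZY.
have [B1 B2] := block (subset_trans YX XX0) Y0 hY hmin.
set X' := X :\: Y.
have hX' : vz X' = 0.
  move: hX; rewrite /vz (big_setID Y) /= (setIidPr YX) -/(vz Y) hY add0r.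
  by [].
have cX' : (#|X'| <= N)%N.
  have := cardsD X Y; rewrite (setIidPr YX) -/X' => ->.
  have : (0 < #|Y|)%N by rewrite card_gt0.
  have := subset_leq_card YX; move: hN; clear; lia.
have [I1 I2] := IH X' cX' (subset_trans (subsetDl _ _) XX0) hX'.
have hXU : X = Y :|: X'.
  apply/setP => i; rewrite !inE; have := subsetP YX i.
  by case: (i \in Y); case: (i \in X) => // ->.
have hYX' : Y :&: X' = set0.
  by apply/setP => i; rewrite !inE; case: (i \in Y); rewrite ?andbF.
have cA : #|PA X| = (#|PA Y| + #|PA X'|)%N.
  by rewrite hXU PA_U -cardsUI (PA_disj hYX') cards0 addn0.
have cB : #|PB X| = (#|PB Y| + #|PB X'|)%N.
  by rewrite hXU PB_U -cardsUI (PB_disj hYX') cards0 addn0.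
rewrite cA cB; split; first by move: B1 I1; clear; lia.
move=> har.
have [B3 B4] := B2 (leq_trans (leq_addr _ _) har).
have [I3 I4] := I2 (leq_trans (leq_addl _ _) har).
split; first by move: B3 I3; clear; lia.
move=> heq t.
have eB : #|PB Y| = #|PA Y| by move: heq B3 I3; clear; lia.
have eI : #|PB X'| = #|PA X'| by move: heq B3 I3; clear; lia.
rewrite hXU PA_U PB_U !card_splitU ?(PA_disj hYX') ?(PB_disj hYX') //.
by rewrite (B4 eB t) (I4 eI t).
Qed.

Lemma combined : \sum_(a in S) c a *: tprod (x a) = \sum_(b < k) tprod (yz b) ->
  (minn #|S| r.+1 <= k)%N /\
  ((#|S| <= r)%N -> (#|S| <= k)%N /\ (k = #|S| ->
     forall t, #|[set a in S | c a *: tprod (x a) == t]| = #|[set b : 'I_k | tprod (yz b) == t]|)).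
Proof.
move=> hsum.
have hv : vz X0 = 0.
  rewrite /vz big_sumType /=.
  have -> : \sum_(i | inl i \in X0) cc (inl i) *: tprod (zz (inl i)) = \sum_(a in S) c a *: tprod (x a).
    by apply: eq_bigl => a; rewrite inE.
  have -> : \sum_(i | inr i \in X0) cc (inr i) *: tprod (zz (inr i)) = - \sum_(b < k) tprod (yz b).
    rewrite (eq_bigl xpredT); last by move=> b; rewrite inE.
    by rewrite -sumrN; apply: eq_bigr => b _ /=; rewrite scaleN1r.
  by rewrite hsum subrr.
have [I1 I2] := invariant (leqnn _) (subxx _) hv.
have eA : PA X0 = S by apply/setP => a; rewrite !inE.
have eB : PB X0 = setT by apply/setP => b; rewrite !inE.
rewrite eA eB cardsT card_ord in I1 I2; split => // hS.
have [I3 I4] := I2 hS; split => // ek t; rewrite (I4 ek t).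
by apply: eq_card => b; rewrite !inE.
Qed.

End Cor.

Lemma seq_decomp (F : fieldType) m (dims : 'I_m -> nat) (s : seq (tensor F dims)) :
  (forall t, t \in s -> is_product_tensor t) ->
  exists zs : seq (forall j : 'I_m, 'rV[F]_(dims j)), map (@tprod F m dims) zs = s.
Proof.
elim: s => [|t s IH] hs; first by exists [::].
have [zs hzs] : exists zs : seq (forall j : 'I_m, 'rV[F]_(dims j)), map (@tprod F m dims) zs = s.
  by apply: IH => t' ht'; apply: hs; rewrite inE ht' orbT.
have [_ [z hz]] := hs t (mem_head _ _).
by exists (z :: zs); rewrite /= hzs hz.
Qed.

Lemma tprod_scale (F : fieldType) m (dims : 'I_m -> nat) (z : forall j : 'I_m, 'rV[F]_(dims j))
  (j0 : 'I_m) (c : F) : c *: tprod z = tprod (dfwith z (c *: z j0)).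
Proof.
apply/ffunP => ii; rewrite ffunE !tprodE (bigD1 j0) // [in RHS](bigD1 j0) //= dfwith_in mxE.
rewrite -[c *: _]/(c * _) mulrA.
congr (_ * _); apply: eq_bigr => j hj; by rewrite dfwith_out // eq_sym.
Qed.

Unset Implicit Arguments.
Set Strict Implicit.

Theorem corollary7p3 (F : fieldType) (n m : nat) (dims : 'I_m -> nat)
  (x : 'I_n -> forall j : 'I_m, 'rV[F]_(dims j)) (r : nat) :
  (2 <= n)%N -> (2 <= m)%N -> (r <= n)%N ->
  (forall a, is_product_tensor (tprod (x a))) ->
  (forall S : {set 'I_n}, (2 <= #|S|)%N ->
     (#|S| + minn #|S| r <= \sum_(j < m) (dspan x S j - 1) + 1)%N) ->
  (forall (S : {set 'I_n}) (c : 'I_n -> F),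
     (r < #|S|)%N -> (forall a, a \in S -> c a != 0) ->
     \sum_(a in S) c a *: tprod (x a) != 0 ->
     ~ trank_le (\sum_(a in S) c a *: tprod (x a)) r) /\
  (forall v : tensor F dims,
     (exists c : 'I_n -> F, v = \sum_(a < n) c a *: tprod (x a)) ->
     trank_le v r ->
     exists (S : {set 'I_n}) (c : 'I_n -> F),
       (forall a, a \in S -> c a != 0) /\
       v = \sum_(a in S) c a *: tprod (x a) /\
       unique_trd v [seq c a *: tprod (x a) | a <- enum S]).
Proof.
move=> hn hm hr hx hyp.
have hx' : forall a, tprod (x a) != 0 by move=> a; exact: (hx a).1.
have key : forall (S : {set 'I_n}) (c : 'I_n -> F) (s : seq (tensor F dims)),
  (forall a, a \in S -> c a != 0) -> (forall t, t \in s -> is_product_tensor t) ->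
  \sum_(a in S) c a *: tprod (x a) = \sum_(t <- s) t ->
  (minn #|S| r.+1 <= size s)%N /\ ((#|S| <= r)%N -> (#|S| <= size s)%N /\
     (size s = #|S| -> perm_eq [seq c a *: tprod (x a) | a <- enum S] s)).
  move=> S c s hc hps hsum.
  have [zs hzs] := seq_decomp hps.
  pose z0 := fun j : 'I_m => (0 : 'rV[F]_(dims j)).
  pose yz := fun b : 'I_(size s) => nth z0 zs b.
  have hsz : size zs = size s by rewrite -hzs size_map.
  have hyz : forall b : 'I_(size s), tprod (yz b) = nth 0 s b.
    move=> b; have hb : (b < size zs)%N by rewrite hsz.
    by have := nth_map z0 0 (@tprod F m dims) hb; rewrite hzs => ->.
  have hy : forall b, tprod (yz b) != 0.
    by move=> b; rewrite hyz; exact: (hps _ (mem_nth 0 (ltn_ord b))).1.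
  have hsum' : \sum_(a in S) c a *: tprod (x a) = \sum_(b < size s) tprod (yz b).
    by rewrite hsum (big_nth 0) big_mkord; apply: eq_bigr => b _; rewrite hyz.
  have [K1 K2] := combined hx' hyp hy hc hsum'.
  split => // hS; have [K3 K4] := K2 hS; split => // es.
  rewrite /perm_eq; apply/allP => t _; apply/eqP.
  rewrite count_enum_card (K4 es t).
  have hsl : [seq tprod (yz b) | b <- enum [set: 'I_(size s)]] = s.
    rewrite enum_setT -enumT (eq_map hyz).
    rewrite (map_comp (nth 0 s) val) val_enum_ord.
    by rewrite -/(mkseq (nth 0 s) (size s)) mkseq_nth.
  by rewrite -[in RHS]hsl count_enum_card; apply: eq_card => b; rewrite !inE.
split.
  move=> S c hSr hc _ [s [hs [hps hv]]].
  have [K1 _] := key S c s hc hps hv.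
  by move: K1 hSr hs; clear; lia.
move=> v [c hv] [s [hs [hps hvs]]].
set S := [set a | c a != 0].
have hvS : v = \sum_(a in S) c a *: tprod (x a).
  rewrite hv (bigID (fun a => c a != 0)) /= [X in _ + X]big1 ?addr0.
    by apply: eq_bigl => a; rewrite inE.
  by move=> a /negPn/eqP ->; rewrite scale0r.
have hcS : forall a, a \in S -> c a != 0 by move=> a; rewrite inE.
have [K1 K2] := key S c s hcS hps (etrans (esym hvS) hvs).
have hSr : (#|S| <= r)%N.
  have arith : forall a b : nat, (minn a r.+1 <= b -> b <= r -> a <= r)%N by clear; lia.
  exact: arith K1 hs.
exists S, c; split => //; split => //.
have j0 : 'I_m by apply: (@Ordinal _ 0); apply: leq_trans hm.
split.
  split.
    move=> t /mapP[a aS ->]; split.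
      by rewrite scaler_eq0 negb_or hcS ?hx' // -mem_enum.
    by exists (dfwith (x a) (c a *: x a j0)); apply: tprod_scale.
  by rewrite big_map big_enum.
move=> s' hs' [hps' hvs'].
have [_ K4] := key S c s' hcS hps' (etrans (esym hvS) hvs').
have [K5 K6] := K4 hSr.
apply: K6; apply/eqP; rewrite eqn_leq K5 andbT.
by move: hs'; rewrite size_map -cardE.
Qed.
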